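(* Let $\mathcal{P}\subseteq[0,1]^n$ be a polytope with $\mathcal{P}\cap(0,1)^n\neq\emptyset$. If the interior of $\mathcal{P}$ is the unique open face of $\mathcal{P}$ contained in $(0,1)^n$, then $\mathcal{P}=[0,1]^n\cap\mathcal{H}$ for some affine subspace $\mathcal{H}\subseteq\mathbb{R}^n$.
   Context: A face of $\mathcal{P}$ is a set of the form $F=\arg\max_{p\in\mathcal{P}}w^Tp$ for some $w\in\mathbb{R}^n$ (taking $w=0$ gives $\mathcal{P}$ itself); its dimension is that of its affine span. The open face $\tilde F$ corresponding to a face $F$ is the set of points of $F$ that belong to no face of $\mathcal{P}$ of lower dimension. The interior of $\mathcal{P}$ means the open face corresponding to the face $\mathcal{P}$ itself (its relative interior). *)

(* Defs.v *)
From HB Require Import structures.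
From mathcomp Require Import all_boot all_order all_algebra.
From mathcomp Require Import reals.
Set Implicit Arguments. Unset Strict Implicit. Unset Printing Implicit Defensive.
Import Order.TTheory GRing.Theory Num.Theory.
Local Open Scope ring_scope.

Section Defs.
Variables (R : realType) (n : nat).
Notation pt := 'rV[R]_n.

Definition dotp (w p : pt) : R := \sum_(i < n) w 0 i * p 0 i.

Definition conv (V : seq pt) (x : pt) : Prop :=
  exists lam : 'I_(size V) -> R,
    (forall i, 0 <= lam i) /\ \sum_i lam i = 1 /\
    x = \sum_i lam i *: V`_i.

Definition polytope (P : pt -> Prop) : Prop :=
  exists V : seq pt, forall x, P x <-> conv V x.

Definition cube01 (x : pt) : Prop := forall i, 0 <= x 0 i <= 1.
Definition open_cube01 (x : pt) : Prop := forall i, 0 < x 0 i < 1.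

(* F = argmax_{p in P} w^T p for some w (w = 0 gives P itself) *)
Definition is_face (P F : pt -> Prop) : Prop :=
  exists w : pt, forall x, F x <-> (P x /\ forall q, P q -> dotp w q <= dotp w x).

(* affine rank of a finite list of points = (dimension of its affine span) + 1,
   and 0 for the empty list *)
Definition affrank (s : seq pt) : nat :=
  if s is x0 :: r then (\rank (\matrix_(i < size r, j < n) (r`_i - x0) 0 j)).+1 else 0.

(* dim (aff span G) < dim (aff span F) (dimensions shifted by one, so that the
   empty set has "dimension -1") *)
Definition lower_dim (G F : pt -> Prop) : Prop :=
  exists k : nat,
    (forall s : seq pt, (forall x, x \in s -> G x) -> (affrank s <= k)%N) /\
    (exists s : seq pt, (forall x, x \in s -> F x) /\ (k < affrank s)%N).

Definition open_face (P F : pt -> Prop) (x : pt) : Prop :=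
  F x /\ ~ (exists G, is_face P G /\ lower_dim G F /\ G x).

(* the interior (relative interior) of P *)
Definition interiorP (P : pt -> Prop) : pt -> Prop := open_face P P.

End Defs.

(* Main.v *)
Require Import Defs.
From HB Require Import structures.
From mathcomp Require Import all_boot all_order all_algebra.
From mathcomp Require Import reals.
From mathcomp Require Import boolp classical_sets topology normedtype derive.
From mathcomp Require Import ring lra.
From Stdlib Require Import Classical.
Import Order.TTheory GRing.Theory Num.Theory.
Import numFieldNormedType.Exports.
Local Open Scope ring_scope.
Section Cont.
Variable (R : realType).
Lemma cont_sum (T : topologicalType) (I : Type) (r : seq I) (P : pred I) (F : I -> T -> R) :
  (forall i, continuous (F i)) -> continuous (fun x => \sum_(i <- r | P i) F i x).
Proof.
move=> Fc; elim: r => [|a r IH].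
  have -> : (fun x => \sum_(i <- [::] | P i) F i x) = (fun _ => 0).
    by apply: funext => x; rewrite big_nil.
  exact: cst_continuous.
case Pa: (P a).
  have -> : (fun x => \sum_(i <- a :: r | P i) F i x) = (fun x => F a x + \sum_(i <- r | P i) F i x).
    by apply: funext => x; rewrite big_cons Pa.
  by move=> x; exact: (continuousD (Fc a x) (IH x)).
have -> : (fun x => \sum_(i <- a :: r | P i) F i x) = (fun x => \sum_(i <- r | P i) F i x).
  by apply: funext => x; rewrite big_cons Pa.
exact: IH.
Qed.
End Cont.

Section ProjS.
Variables (R : realType) (n : nat).
Local Open Scope classical_set_scope.

Lemma closed_sum1 m : closed [set l : 'rV[R]_m | \sum_(i < m) l 0 i = 1].
Proof.
have -> : [set l : 'rV[R]_m | \sum_(i < m) l 0 i = 1] =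
   (fun l : 'rV[R]_m => \sum_(i < m) l 0 i) @^-1` [set x | x = 1] by [].
apply: preimage_closed; last exact: closed_eq.
move=> x _; apply: cont_sum => i.
exact: coord_continuous.
Qed.

Lemma proj_exists (V : seq 'rV[R]_n) (y : 'rV[R]_n) : (0 < size V)%N ->
  exists2 p, conv V p & forall q, conv V q -> dotp (y - p) (y - p) <= dotp (y - q) (y - q).
Proof.
move=> V0.
set m := size V.
pose comb (l : 'rV[R]_m) : 'rV[R]_n := \sum_(i < m) l 0 i *: V`_i.
pose g (l : 'rV[R]_m) (j : 'I_n) : R := y 0 j - \sum_(i < m) l 0 i * V`_i 0 j.
pose f (l : 'rV[R]_m) : R := \sum_(j < n) g l j * g l j.
have fE l : f l = dotp (y - comb l) (y - comb l).
  rewrite /f /dotp; apply: eq_bigr => j _; rewrite /g !mxE summxE.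
  by under [\sum_(i < m) (l 0 i *: V`_i) 0 j]eq_bigr do rewrite mxE.
pose S := [set l : 'rV[R]_m | forall i, `[0, 1]%classic (l ord0 i)] `&` [set l | \sum_(i < m) l 0 i = 1].
have cS : compact S.
  apply: compact_closedI; last exact: closed_sum1.
  have := @rV_compact R m (fun _ => `[0, 1]%classic); apply; move=> _; exact: segment_compact.
have gc j : continuous (g ^~ j).
  move=> x; apply: continuousB; first exact: cst_continuous.
  apply: cont_sum => i z.
  apply: continuousM; [exact: coord_continuous | exact: cst_continuous].
have fc : continuous f.
  apply: cont_sum => j z.
  exact: (continuousM (gc j z) (gc j z)).
have S0 : S !=set0.
  pose i0 : 'I_m := Ordinal V0.
  exists (delta_mx 0 i0); split.
    move=> i /=; rewrite mxE in_itv /=.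
    by case: (i == i0); rewrite ?lexx ?ler01.
  rewrite /= (bigD1 i0) //= mxE !eqxx /= big1 ?addr0 // => i /negPf Hi.
  by rewrite mxE Hi.
have [c cS' cmin] := compact_EVT_min S0 cS (continuous_subspaceT fc).
move: cS'; rewrite inE => -[/= c01 c1].
exists (comb c).
  exists (fun i => c 0 i); split; last split => //.
  by move=> i; have := c01 i; rewrite /= in_itv /= => /andP[].
move=> q [lam [l0 [l1 ->]]].
pose l := \row_(i < m) lam i.
have lS : l \in S.
  rewrite inE; split.
    move=> i /=; rewrite mxE in_itv /= l0 /=.
    rewrite -l1 (bigD1 i) //= lerDl; exact: sumr_ge0.
  by rewrite /= -l1; apply: eq_bigr => i _; rewrite mxE.
have := cmin _ lS; rewrite !fE.
suff -> : comb l = \sum_i lam i *: V`_i by [].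
by apply: eq_bigr => i _; rewrite mxE.
Qed.
End ProjS.

Section Alg.
Variables (R : realType) (n : nat).
Implicit Types (w p q u v : 'rV[R]_n).

Lemma dotpDr w p q : dotp w (p + q) = dotp w p + dotp w q.
Proof. by rewrite /dotp -big_split; apply: eq_bigr => i _; rewrite mxE mulrDr. Qed.
Lemma dotpZr w a p : dotp w (a *: p) = a * dotp w p.
Proof. by rewrite /dotp mulr_sumr; apply: eq_bigr => i _; rewrite mxE mulrCA. Qed.
Lemma dotpNr w p : dotp w (- p) = - dotp w p.
Proof. by rewrite /dotp -sumrN; apply: eq_bigr => i _; rewrite mxE mulrN. Qed.
Lemma dotpBr w p q : dotp w (p - q) = dotp w p - dotp w q.
Proof. by rewrite dotpDr dotpNr. Qed.
Lemma dotpC w p : dotp w p = dotp p w.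
Proof. by apply: eq_bigr => i _; rewrite mulrC. Qed.
Lemma dotpDl w p q : dotp (p + q) w = dotp p w + dotp q w.
Proof. by rewrite dotpC dotpDr !(dotpC w). Qed.
Lemma dotpBl w p q : dotp (p - q) w = dotp p w - dotp q w.
Proof. by rewrite dotpC dotpBr !(dotpC w). Qed.
Lemma dotpZl w a p : dotp (a *: p) w = a * dotp p w.
Proof. by rewrite dotpC dotpZr dotpC. Qed.
Lemma dotp0r w : dotp w 0 = 0.
Proof. by rewrite /dotp big1 // => i _; rewrite mxE mulr0. Qed.
Lemma dotp0l w : dotp 0 w = 0.
Proof. by rewrite dotpC dotp0r. Qed.
Lemma dotp_sumr w (I : Type) (r : seq I) (P : pred I) (F : I -> 'rV[R]_n) :
  dotp w (\sum_(i <- r | P i) F i) = \sum_(i <- r | P i) dotp w (F i).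
Proof. exact: (big_morph (dotp w) (dotpDr w) (dotp0r w)). Qed.
Lemma dotp_delta i q : dotp (delta_mx 0 i) q = q 0 i.
Proof.
rewrite /dotp (bigD1 i) //= mxE !eqxx mul1r big1 ?addr0 // => j /negPf Hj.
by rewrite mxE Hj andbF mul0r.
Qed.
Lemma dotp_ge0 v : 0 <= dotp v v.
Proof. by apply: sumr_ge0 => i _; rewrite -expr2 sqr_ge0. Qed.
Lemma coord_le v i : v 0 i * v 0 i <= dotp v v.
Proof.
rewrite /dotp (bigD1 i) //= lerDl; apply: sumr_ge0 => j _; by rewrite -expr2 sqr_ge0.
Qed.
Lemma dotp_eq0 v : dotp v v = 0 -> v = 0.
Proof.
move=> /eqP; rewrite psumr_eq0 => [/allP H|i _]; last by rewrite -expr2 sqr_ge0.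
apply/rowP => j; rewrite mxE.
have := H j (mem_index_enum j); rewrite /= mulf_eq0 orbb => /eqP ->.
by [].
Qed.

Lemma conv_nth (V : seq 'rV[R]_n) i : (i < size V)%N -> conv V V`_i.
Proof.
move=> Hi; pose i0 : 'I_(size V) := Ordinal Hi.
exists (fun j => (j == i0)%:R); split; first by move=> j; case: (j == i0).
split; first by rewrite (bigD1 i0) //= eqxx big1 ?addr0 // => j /negPf ->.
rewrite (bigD1 i0) //= eqxx scale1r big1 ?addr0 // => j /negPf ->.
by rewrite scale0r.
Qed.

Lemma conv_convex (V : seq 'rV[R]_n) p q a : conv V p -> conv V q -> 0 <= a <= 1 ->
  conv V ((1 - a) *: p + a *: q).
Proof.
move=> [lp [lp0 [lp1 ->]]] [lq [lq0 [lq1 ->]]] /andP[a0 a1].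
exists (fun i => (1 - a) * lp i + a * lq i); split.
  move=> i; apply: addr_ge0; apply: mulr_ge0 => //; by rewrite subr_ge0.
split; first by rewrite big_split /= -!mulr_sumr lp1 lq1; lra.
rewrite !scaler_sumr -big_split /=; apply: eq_bigr => i _.
by rewrite !scalerA -scalerDl.
Qed.

Lemma affrank_le (s : seq 'rV[R]_n) : (affrank s <= n.+1)%N.
Proof. by case: s => //= x0 r; rewrite ltnS rank_leq_col. Qed.

Lemma rank_step u c (s : seq 'rV[R]_n) b :
  (forall q, q \in s -> dotp u q = c) -> dotp u b != c ->
  (affrank s < affrank (rcons s b))%N.
Proof.
case: s => [|x0 r] Hs Hb //=.
rewrite ltnS.
set M := \matrix_(i < size r, j < n) (r`_i - x0) 0 j.
set M' := \matrix_(i < size (rcons r b), j < n) ((rcons r b)`_i - x0) 0 j.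
have lt1 : (size r <= size (rcons r b))%N by rewrite size_rcons.
have sub : (M <= M')%MS.
  apply/row_subP => i.
  have -> : row i M = row (widen_ord lt1 i) M'.
    by apply/rowP => j; rewrite !mxE /= nth_rcons ltn_ord.
  exact: row_sub.
have lt2 : (size r < size (rcons r b))%N by rewrite size_rcons.
have bM' : ((b - x0) <= M')%MS.
  have -> : b - x0 = row (Ordinal lt2) M'.
    by apply/rowP => j; rewrite !mxE /= nth_rcons ltnn eqxx.
  exact: row_sub.
have nb : ~~ ((b - x0) <= M)%MS.
  apply/negP => /submxP [D HD].
  have : dotp u (b - x0) = 0.
    rewrite HD /dotp.
    under eq_bigr do rewrite mxE big_distrr /=.
    rewrite exchange_big /= big1 // => i _.
    have -> : \sum_(j < n) u 0 j * (D 0 i * M i j) = D 0 i * dotp u (r`_i - x0).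
      by rewrite /dotp mulr_sumr; apply: eq_bigr => j _; rewrite mxE mulrCA.
    rewrite dotpBr !Hs ?subrr ?mulr0 //; first by rewrite in_cons eqxx.
    by rewrite in_cons mem_nth ?orbT.
  rewrite dotpBr [dotp u x0]Hs ?in_cons ?eqxx // => /eqP; rewrite subr_eq0.
  by rewrite (negPf Hb).
apply: rank_ltmx; rewrite ltmxE sub /=.
by apply/negP => HM'; move: nb; rewrite (submx_trans bM' HM').
Qed.

Lemma lowdim (G B : 'rV[R]_n -> Prop) u c b :
  (forall q, G q -> B q) -> (forall q, G q -> dotp u q = c) -> B b -> dotp u b != c ->
  lower_dim G B.
Proof.
move=> GB Gc Bb Hb; apply: NNPP => nL.
suff H : forall j, exists s, (forall x, x \in s -> G x) /\ (j <= affrank s)%N.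
  have [s [_ Hs]] := H n.+2.
  by have := leq_trans Hs (affrank_le s); rewrite ltnn.
elim=> [|j [s [sG js]]]; first by exists [::].
apply: NNPP => nex; apply: nL; exists (affrank s); split.
  move=> s' s'G; rewrite leqNgt; apply/negP => lt.
  by apply: nex; exists s'; split => //; apply: leq_trans lt.
exists (rcons s b); split.
  by move=> x; rewrite mem_rcons in_cons => /orP[/eqP ->|/sG/GB].
apply: (@rank_step u c) => // q /sG; exact: Gc.
Qed.


Section Faces.
Variable (P : 'rV[R]_n -> Prop).

Definition argmax w := fun q => P q /\ forall q', P q' -> dotp w q' <= dotp w q.

Lemma argmax_face w : is_face P (argmax w).
Proof. by exists w. Qed.

Lemma face_self : is_face P P.
Proof.
exists 0 => x; split => [Px|[]//]; split => // q _; by rewrite !dotp0l.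
Qed.

Lemma descent z : P z -> exists G, is_face P G /\ open_face P G z.
Proof.
move=> Pz.
suff H : forall k G, is_face P G -> G z ->
    (forall s, (forall x, x \in s -> G x) -> (affrank s <= k)%N) ->
    exists G', is_face P G' /\ open_face P G' z.
  by apply: (H n.+1 P face_self Pz) => s _; exact: affrank_le.
elim/ltn_ind => k IH G fG Gz Gb.
case: (classic (exists G', is_face P G' /\ lower_dim G' G /\ G' z)) =>
   [[G' [fG' [[k' [Hk' [s [sG ks]]]] G'z]]]|N].
  by apply: (IH k' _ G' fG' G'z Hk'); exact: leq_trans ks (Gb s sG).
by exists G; split => //; split.
Qed.

Lemma face_open_cube (Hc : forall x, P x -> cube01 x) G z x :
  is_face P G -> G z -> open_cube01 z -> open_face P G x -> open_cube01 x.
Proof.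
move=> [w Hw] Gz oz [Gx nlow] i.
have [Px xmax] := (Hw x).1 Gx.
have /andP[zi0 zi1] := oz i.
have /andP[xi0 xi1] := Hc x Px i.
apply/andP; split.
- rewrite lt_neqAle xi0 andbT; apply/eqP => xi.
  apply: nlow.
  exists (argmax (w - delta_mx 0 i)); split; first exact: argmax_face.
  have key : forall q, argmax (w - delta_mx 0 i) q -> G q /\ q 0 i = 0.
    move=> q [Pq Hq].
    have := Hq x Px; rewrite !dotpBl !dotp_delta -xi => H1.
    have H2 := xmax q Pq.
    have /andP[qi0 _] := Hc q Pq i.
    have qi : q 0 i = 0 by lra.
    split => //; apply/(Hw q); split => // q' Pq'.
    have := xmax q' Pq'; lra.
  split.
    apply: (@lowdim _ _ (delta_mx 0 i) 0 z).
    - by move=> q /key [].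
    - by move=> q /key [_]; rewrite dotp_delta.
    - done.
    - by rewrite dotp_delta gt_eqF.
  split => // q' Pq'; rewrite !dotpBl !dotp_delta -xi.
  have := xmax q' Pq'; have /andP[? _] := Hc q' Pq' i; lra.
- rewrite lt_neqAle xi1 andbT; apply/eqP => xi.
  apply: nlow.
  exists (argmax (w + delta_mx 0 i)); split; first exact: argmax_face.
  have key : forall q, argmax (w + delta_mx 0 i) q -> G q /\ q 0 i = 1.
    move=> q [Pq Hq].
    have := Hq x Px; rewrite !dotpDl !dotp_delta xi => H1.
    have H2 := xmax q Pq.
    have /andP[_ qi1] := Hc q Pq i.
    have qi : q 0 i = 1 by lra.
    split => //; apply/(Hw q); split => // q' Pq'.
    have := xmax q' Pq'; lra.
  split.
    apply: (@lowdim _ _ (delta_mx 0 i) 1 z).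
    - by move=> q /key [].
    - by move=> q /key [_]; rewrite dotp_delta.
    - done.
    - by rewrite dotp_delta lt_eqF.
  split => // q' Pq'; rewrite !dotpDl !dotp_delta xi.
  have := xmax q' Pq'; have /andP[_ ?] := Hc q' Pq' i; lra.
Qed.

Lemma K1 (Hc : forall x, P x -> cube01 x)
  (H5 : forall F, is_face P F -> (forall x, open_face P F x -> open_cube01 x) ->
     forall x, open_face P F x <-> interiorP P x) z w :
  P z -> open_cube01 z -> (forall q, P q -> dotp w q <= dotp w z) ->
  forall q, P q -> dotp w q = dotp w z.
Proof.
move=> Pz oz zmax q Pq; apply: NNPP => ne.
have Fz : argmax w z by split.
have low : lower_dim (argmax w) P.
  apply: (@lowdim _ _ w (dotp w z) q) => //.
  - by move=> q' [].
  - by move=> q' [Pq' H']; apply/eqP; rewrite eq_le H' // zmax.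
  - by apply/eqP.
have [G [fG oG]] := descent _ Pz.
have Gsub := fun x => @face_open_cube Hc G z x fG oG.1 oz.
have := (H5 G fG Gsub z).1 oG.
rewrite /interiorP /open_face => -[_]; apply.
by exists (argmax w); split; [exact: argmax_face | split].
Qed.

End Faces.
End Alg.
Arguments dotpDr {R n}. Arguments dotpZr {R n}. Arguments dotpNr {R n}. Arguments dotpBr {R n}.
Arguments dotpC {R n}. Arguments dotpDl {R n}. Arguments dotpBl {R n}. Arguments dotpZl {R n}.
Arguments dotp0r {R n}. Arguments dotp0l {R n}. Arguments dotp_sumr {R n}. Arguments dotp_delta {R n}.
Arguments dotp_ge0 {R n}. Arguments coord_le {R n}. Arguments dotp_eq0 {R n}.
Arguments conv_nth {R n}. Arguments conv_convex {R n}. Arguments affrank_le {R n}.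

Section Fin.
Variables (R : realType) (n : nat).
Implicit Types (w p q u v : 'rV[R]_n).

Lemma margin (x0 : 'rV[R]_n) : open_cube01 x0 ->
  exists2 d, 0 < d /\ d <= 1/2 & forall i, d <= x0 0 i /\ d <= 1 - x0 0 i.
Proof.
move=> ox.
suff: forall r : seq 'I_n, exists2 d, 0 < d /\ d <= 1/2 &
    forall i, i \in r -> d <= x0 0 i /\ d <= 1 - x0 0 i.
  by move=> /(_ (enum 'I_n)) [d d0 Hd]; exists d => // i; apply: Hd; rewrite mem_enum.
elim=> [|a r [d [d0 d1] Hd]]; first by exists (1/2) => //; split; lra.
have /andP[a0 a1] := ox a.
have [e [e0 [ed [ea1 ea2]]]] : exists e, 0 < e /\ e <= d /\ e <= x0 0 a /\ e <= 1 - x0 0 a.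
  case: (lerP d (x0 0 a)) => h1; case: (lerP d (1 - x0 0 a)) => h2.
  - by exists d; split => //; lra.
  - by exists (1 - x0 0 a); split; lra.
  - case: (lerP (x0 0 a) (1 - x0 0 a)) => h3.
    + by exists (x0 0 a); split; lra.
    + by exists (1 - x0 0 a); split; lra.
  - case: (lerP (x0 0 a) (1 - x0 0 a)) => h3.
    + by exists (x0 0 a); split; lra.
    + by exists (1 - x0 0 a); split; lra.
exists e; first by split; lra.
move=> i; rewrite in_cons => /orP[/eqP ->|/Hd [h1 h2]]; first by split.
split; lra.
Qed.

Lemma aff_const (V : seq 'rV[R]_n) x0 w y :
  (forall i, (i < size V)%N -> dotp w V`_i = dotp w x0) ->
  y - x0 \in <<[seq v - x0 | v <- V]>>%VS -> dotp w y = dotp w x0.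
Proof.
move=> HV Hy.
have := @coord_span _ _ _ (in_tuple [seq v - x0 | v <- V]) (y - x0) Hy.
move=> /(congr1 (dotp w)); rewrite dotp_sumr dotpBr big1.
  by move=> /eqP; rewrite subr_eq0 => /eqP.
move=> i _; rewrite dotpZr /= (nth_map 0); last by rewrite size_map in i *.
rewrite dotpBr HV ?subrr ?mulr0 //; by rewrite size_map in i *.
Qed.

Lemma nrmZ a v : dotp (a *: v) (a *: v) = a ^+ 2 * dotp v v.
Proof. by rewrite dotpZl dotpZr mulrA expr2. Qed.

Lemma nrmN v : dotp (- v) (- v) = dotp v v.
Proof. by rewrite -scaleN1r nrmZ sqrrN expr1n mul1r. Qed.

Lemma nrm_par (a b : 'rV[R]_n) : dotp (a + b) (a + b) <= 2 * dotp a a + 2 * dotp b b.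
Proof.
have := dotp_ge0 (a - b).
rewrite !dotpBl !dotpBr !dotpDl !dotpDr (dotpC b a); lra.
Qed.

Lemma nrm_exp (d e : 'rV[R]_n) a : dotp (d - a *: e) (d - a *: e) =
  dotp d d - 2 * a * dotp d e + a ^+ 2 * dotp e e.
Proof.
rewrite dotpBl !dotpBr nrmZ !dotpZl !dotpZr (dotpC e d); lra.
Qed.

End Fin.
Arguments margin {R n}. Arguments nrmZ {R n}. Arguments nrmN {R n}. Arguments nrm_par {R n}. Arguments nrm_exp {R n}.

Theorem lemmaB6 (R : realType) (n : nat) (P : 'rV[R]_n -> Prop) :
  polytope P ->
  (forall x, P x -> cube01 x) ->
  (exists x, P x /\ open_cube01 x) ->
  (* the interior of P is an open face contained in (0,1)^n ... *)
  (forall x, interiorP P x -> open_cube01 x) ->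
  (* ... and it is the only one *)
  (forall F, is_face P F ->
     (forall x, open_face P F x -> open_cube01 x) ->
     forall x, open_face P F x <-> interiorP P x) ->
  exists (x0 : 'rV[R]_n) (U : {vspace 'rV[R]_n}),
    forall x, P x <-> (cube01 x /\ x - x0 \in U).
Proof.
move=> [V HV] Hc [x0 [Px0 ox0]] _ H5.
have K := @K1 R n P Hc H5.
have sV : (0 < size V)%N.
  case: V HV => [|v V] HV //.
  have [lam [_ [l1 _]]] := (HV x0).1 Px0.
  by move: l1; rewrite big_ord0 => /eqP; rewrite eq_sym oner_eq0.
have PV : forall i, (i < size V)%N -> P V`_i.
  by move=> i Hi; apply/HV; apply: conv_nth.
have Pcvx : forall p q a, P p -> P q -> 0 <= a <= 1 -> P ((1 - a) *: p + a *: q).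
  by move=> p q a /HV Hp /HV Hq Ha; apply/HV; apply: conv_convex.
have proj : forall y, exists2 p, P p &
    forall q, P q -> dotp (y - p) (y - p) <= dotp (y - q) (y - q).
  move=> y; have [p Hp Hmin] := @proj_exists R n V y sV.
  by exists p; [apply/HV | move=> q /HV; exact: Hmin].
have var : forall y p, P p ->
    (forall q, P q -> dotp (y - p) (y - p) <= dotp (y - q) (y - q)) ->
    forall q, P q -> dotp (y - p) q <= dotp (y - p) p.
  move=> y p Pp Hmin q Pq.
  set d := y - p.
  set N := dotp (q - p) (q - p).
  set g := dotp d (q - p).
  suff : g <= 0 by rewrite /g dotpBr subr_le0.
  case: (lerP g 0) => // g0; exfalso.
  have N0 : 0 <= N := dotp_ge0 _.
  pose a := g / (N + g).
  have Ng : 0 < N + g by lra.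
  have ha : a * (N + g) = g by rewrite /a divfK // gt_eqF.
  have a0 : 0 < a by apply: divr_gt0.
  have a1 : a <= 1 by rewrite /a ler_pdivrMr //; lra.
  have := Hmin _ (Pcvx p q a Pp Pq (introT andP (conj (ltW a0) a1))).
  have -> : y - ((1 - a) *: p + a *: q) = d - a *: (q - p).
    by apply/rowP => j; rewrite /d !mxE; ring.
  rewrite nrm_exp -/g -/N => H.
  have H2 : 0 <= a * (a * N - 2 * g) by nra.
  have H3 : 0 <= a * N - 2 * g.
    by move: H2; rewrite pmulr_rge0.
  nra.
set U := <<[seq v - x0 | v <- V]>>%VS.
exists x0, U => x; split.
  move=> Px; split; first exact: Hc.
  have [lam [l0 [l1 ->]]] := (HV x).1 Px.
  have -> : \sum_i lam i *: V`_i - x0 = \sum_i lam i *: (V`_i - x0).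
    rewrite [RHS](eq_bigr (fun i => lam i *: V`_i - lam i *: x0)); last first.
      by move=> i _; rewrite scalerBr.
    by rewrite sumrB -scaler_suml l1 scale1r.
  apply: memv_suml => i _; apply: memvZ; apply: memv_span.
  by apply/mapP; exists V`_i => //; apply: mem_nth.
move=> [cx Ux]; apply: NNPP => nPx.
have [d0 [d00 d01] Hd0] := margin x0 ox0.
set D := dotp (x - x0) (x - x0).
have D0 : 0 <= D := dotp_ge0 _.
pose ys t := x0 + t *: (x - x0).
have ysU t : ys t - x0 \in U by rewrite /ys addrC addKr; apply: memvZ.
have NC : forall w p, P p -> (forall q, P q -> dotp w q = dotp w p) ->
    forall t, dotp w (ys t) = dotp w p.
  move=> w p Pp Hq t; rewrite (@aff_const R n V x0 w (ys t)) ?Hq //.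
  by move=> i Hi; rewrite !Hq //; apply: PV.
have ys_cube : forall t i, 0 <= t <= 1 ->
    (1 - t) * d0 <= ys t 0 i /\ ys t 0 i <= 1 - (1 - t) * d0.
  move=> t i /andP[t0 t1]; rewrite /ys !mxE.
  have /andP[xi0 xi1] := cx i; have [h1 h2] := Hd0 i.
  split; nra.
have ysD s t : ys s - ys t = (s - t) *: (x - x0).
  by apply/rowP => j; rewrite !mxE; ring.
have KC : forall s t, 0 <= t -> t <= s -> s <= 1 -> ~ P (ys s) -> P (ys t) ->
    4 * ((s - t) ^+ 2 * D) < ((1 - t) * d0) ^+ 2 -> False.
  move=> s t t0 ts s1 nPs Pt small.
  have [p Pp pmin] := proj (ys s).
  set w := ys s - p.
  have pmax := var _ _ Pp pmin.
  have wpos : 0 < dotp w (ys s) - dotp w p.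
    rewrite -dotpBr lt_def dotp_ge0 andbT; apply/eqP => /dotp_eq0 /eqP.
    by rewrite subr_eq0 => /eqP Hs; apply: nPs; rewrite Hs.
  have op : open_cube01 p.
    move=> i.
    have h1 := pmin _ Pt; rewrite ysD nrmZ in h1.
    have h2 := nrm_par (p - ys s) (ys s - ys t).
    rewrite (_ : p - ys s + (ys s - ys t) = p - ys t) in h2; last by rewrite addrA subrK.
    rewrite (_ : dotp (p - ys s) (p - ys s) = dotp (ys s - p) (ys s - p)) in h2; last by rewrite -[p - ys s]opprB nrmN.
    rewrite ysD nrmZ -/D in h2; rewrite -/D in h1.
    have h3 : (p 0 i - ys t 0 i) * (p 0 i - ys t 0 i) <= dotp (p - ys t) (p - ys t).
      by have := coord_le (p - ys t) i; rewrite (_ : (p - ys t) 0 i = p 0 i - ys t 0 i) // mxE [in LHS]mxE.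
    have [h4 h5] := ys_cube t i (introT andP (conj t0 (le_trans ts s1))).
    have h6 : (p 0 i - ys t 0 i) ^+ 2 < ((1 - t) * d0) ^+ 2.
      rewrite expr2; lra.
    have h7 : 0 <= (1 - t) * d0 by apply: mulr_ge0; lra.
    move: h6; rewrite -subr_gt0 subr_sqr => h6.
    have h8 : 0 < (1 - t) * d0 - (p 0 i - ys t 0 i) /\ 0 < (1 - t) * d0 + (p 0 i - ys t 0 i).
      by move: h6; rewrite pmulr_lgt0 //; nra.
    apply/andP; split; lra.
  have Hconst := K p w Pp op pmax.
  have := NC w p Pp Hconst s; lra.
pose T : set R := fun t => (0 <= t <= 1) /\ P (ys t).
have ys0 : ys 0 = x0 by rewrite /ys scale0r addr0.
have T0 : T 0 by split; [rewrite lexx ler01 | rewrite ys0].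
have hT : has_sup T by split; [exists 0 | exists 1 => t [/andP[_ ?] _]].
set ts := sup T.
have tsub : forall t, T t -> t <= ts by move=> t Tt; apply: sup_upper_bound.
have ts0 : 0 <= ts by apply: tsub.
have ts1 : ts <= 1 by apply: ge_sup; [exists 0 | move=> t [/andP[_ ?] _]].
case: (ltrP ts 1) => [ts_lt1 | ts_ge1].
  set e := (1 - ts) * d0 / (4 * (D + 1)).
  have K0 : 0 < 4 * (D + 1) by lra.
  have eK : e * (4 * (D + 1)) = (1 - ts) * d0 by rewrite /e divfK // gt_eqF.
  have e0 : 0 < e by apply: divr_gt0 => //; apply: mulr_gt0; lra.
  have e1 : e <= 1 - ts by nra.
  have [t Tt tgt] := sup_adherent e0 hT; rewrite -/ts in tgt.
  have [/andP[t0 t1] Pt] := Tt.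
  have tts := tsub t Tt.
  apply: (KC (ts + e) t) => //.
  - lra.
  - lra.
  - move=> Ps; have : ts + e <= ts by apply: tsub; split => //; apply/andP; split; lra.
    lra.
  - have hst0 : 0 <= ts + e - t by lra.
    have hst : ts + e - t < 2 * e by lra.
    have hsq : (ts + e - t) ^+ 2 <= 4 * e ^+ 2.
      rewrite !expr2; nra.
    have hD : D < (D + 1) ^+ 2 by rewrite expr2; nra.
    have hK : 16 * e ^+ 2 * D < ((1 - ts) * d0) ^+ 2.
      rewrite -eK !expr2; nra.
    have hK2 : ((1 - ts) * d0) ^+ 2 <= ((1 - t) * d0) ^+ 2.
      rewrite !expr2; apply: ler_pM; nra.
    have : 4 * ((ts + e - t) ^+ 2 * D) <= 16 * e ^+ 2 * D.
      nra.
    lra.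
have tsE : ts = 1 by apply/eqP; rewrite eq_le ts1 ts_ge1.
have [p Pp pmin] := proj x.
set N := dotp (x - p) (x - p).
have N0 : 0 <= N := dotp_ge0 _.
case: (lerP N 0) => [Nle | Npos].
  have : N = 0 by apply/eqP; rewrite eq_le Nle N0.
  move=> /dotp_eq0 /eqP; rewrite subr_eq0 => /eqP xp.
  by apply: nPx; rewrite xp.
set e := N / (N + D + 1).
have ND : 0 < N + D + 1 by lra.
have eK : e * (N + D + 1) = N by rewrite /e divfK // gt_eqF.
have e0 : 0 < e by apply: divr_gt0.
have e1 : e < 1 by rewrite /e ltr_pdivrMr //; lra.
have [t Tt tgt] := sup_adherent e0 hT; rewrite -/ts in tgt.
have [/andP[t0 t1] Pt] := Tt.
have := pmin _ Pt.
have -> : x - ys t = (1 - t) *: (x - x0) by apply/rowP => j; rewrite !mxE; ring.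
rewrite nrmZ -/D tsE in tgt * => h.
have h1 : 0 <= 1 - t by lra.
have h2 : 1 - t < e by lra.
have h3 : (1 - t) ^+ 2 * D <= e * D.
  by apply: ler_wpM2r => //; rewrite expr2; nra.
have h5 : 0 < e * (N + 1) by apply: mulr_gt0; lra.
rewrite -/N in h.
have h4 : e * D < N by nra.
lra.
Qed.
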